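(* Assume $-a_i+1\notin\mathbb{N}_0$ for $i\in\{1,\dots,M\}$, $-b_j\notin\mathbb{N}_0$ for $j\in\{1,\dots,N\}$, and that all denominators below are nonzero. Then for $n\in\mathbb{N}$ the Geronimus transformed orthogonal polynomials satisfy $$ {}_iT^{-1}P_n(z)=P_n(z)-\frac{Q_n(-a_i+1)}{Q_{n-1}(-a_i+1)}P_{n-1}(z),\qquad i\in\{1,\dots,M\},$$ $$T_j^{-1}P_n(z)=P_n(z)-\frac{Q_n(-b_j)}{Q_{n-1}(-b_j)}P_{n-1}(z),\qquad j\in\{1,\dots,N\},$$ $$T^{-1}P_n(z)=P_n(z-1)-\frac{\Upsilon Q_n(-1)-P_n(-1)}{\Upsilon Q_{n-1}(-1)-P_{n-1}(-1)}P_{n-1}(z-1),$$ where $\Upsilon:=\eta\,\prod_{i=1}^M(a_i-1)\big/\prod_{j=1}^N(b_j-1)$.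
   Context: Fix integers $M,N\ge0$ and parameters $\eta,a_1,\dots,a_M,b_1,\dots,b_N$. Let $w(z)=\frac{(a_1)_z\cdots(a_M)_z}{\Gamma(z+1)(b_1)_z\cdots(b_N)_z}\eta^z$, $(\alpha)_z=\Gamma(\alpha+z)/\Gamma(\alpha)$, on nodes $k\in\mathbb{N}_0$, with finite moments $\rho_n=\sum_kk^nw(k)$ and moment matrix $(\rho_{n+m})_{n,m\ge0}$ with all leading principal minors nonzero. $P_n$ is the monic polynomial of degree $n$ with $\sum_kP_n(k)P_m(k)w(k)=\delta_{n,m}H_n$, $H_n\ne0$, and $Q_n(z)=\sum_{k=0}^\infty\frac{P_n(k)w(k)}{z-k}$ is the second kind function. Inverse parameter shifts: ${}_iT^{-1}P_n$ is $P_n$ computed with $a_i$ replaced by $a_i-1$; $T_j^{-1}P_n$ with $b_j$ replaced by $b_j+1$; $T^{-1}P_n$ with every $a_i$ replaced by $a_i-1$ and every $b_j$ by $b_j-1$. It is assumed these shifted weights are well defined, with finite moments and nonzero Hankel determinants. *)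

(* Defs.v *)
From mathcomp Require Import all_boot all_order all_algebra.
Import Order.TTheory GRing.Theory Num.Theory.
From mathcomp Require Import complex.
From mathcomp Require Import all_classical all_reals all_analysis.

Set Implicit Arguments.
Unset Strict Implicit.
Unset Printing Implicit Defensive.

Import numFieldNormedType.Exports.
Local Open Scope ring_scope.

Definition csum_cvg (R : realType) (f : nat -> R[i]) : Prop :=
  cvgn (series (fun k => complex.Re (f k))) /\
  cvgn (series (fun k => complex.Im (f k))).

Definition csum (R : realType) (f : nat -> R[i]) : R[i] :=
  (limn (series (fun k => complex.Re (f k))) +i*
   limn (series (fun k => complex.Im (f k))))%C.

Definition poch (R : realType) (x : R[i]) (k : nat) : R[i] :=
  \prod_(l < k) (x + l%:R).

Definition weight (R : realType) (M N : nat) (eta : R[i])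
    (a : 'I_M -> R[i]) (b : 'I_N -> R[i]) (k : nat) : R[i] :=
  (\prod_(i < M) poch (a i) k) / (k`!%:R * \prod_(j < N) poch (b j) k)
  * eta ^+ k.

Definition moment (R : realType) (w : nat -> R[i]) (n : nat) : R[i] :=
  csum (fun k => (k%:R : R[i]) ^+ n * w k).

Definition moments_finite (R : realType) (w : nat -> R[i]) : Prop :=
  forall n, csum_cvg (fun k => (k%:R : R[i]) ^+ n * w k).

Definition hankel_nonzero (R : realType) (w : nat -> R[i]) : Prop :=
  forall n : nat, \det (\matrix_(i < n, j < n) moment w (i + j)%N) != 0.

Definition is_OPS (R : realType) (w : nat -> R[i])
    (P : nat -> {poly R[i]}) (H : nat -> R[i]) : Prop :=
  forall n, [/\ P n \is monic, size (P n) = n.+1, H n != 0 &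
    forall m, csum (fun k => (P n).[k%:R] * (P m).[k%:R] * w k)
              = if n == m then H n else 0].

Definition Qfun (R : realType) (w : nat -> R[i]) (P : nat -> {poly R[i]})
    (n : nat) (z : R[i]) : R[i] :=
  csum (fun k => (P n).[k%:R] * w k / (z - k%:R)).

Definition shift_a (R : realType) (M : nat) (i : 'I_M) (a : 'I_M -> R[i]) :
  'I_M -> R[i] := fun l => if l == i then a l - 1 else a l.
Definition shift_b (R : realType) (N : nat) (j : 'I_N) (b : 'I_N -> R[i]) :
  'I_N -> R[i] := fun l => if l == j then b l + 1 else b l.
Definition shift_all (R : realType) (K : nat) (c : 'I_K -> R[i]) :
  'I_K -> R[i] := fun l => c l - 1.

(* Main.v *)
Require Import Defs.
From mathcomp Require Import all_boot all_order all_algebra.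
Import Order.TTheory GRing.Theory Num.Theory.
From mathcomp Require Import complex.
From mathcomp Require Import all_classical all_reals all_analysis.
From mathcomp Require Import ring lra.
Local Open Scope ring_scope.
Local Open Scope complex_scope.
Local Open Scope ring_scope.
Import numFieldNormedType.Exports.
Set Implicit Arguments.
Unset Strict Implicit.

Section CS.
Variable R : realType.
Local Notation C := R[i].
Implicit Types f g : nat -> C.

Lemma ReD (x y : C) : complex.Re (x + y) = complex.Re x + complex.Re y.
Proof. by case: x; case: y. Qed.
Lemma ImD (x y : C) : complex.Im (x + y) = complex.Im x + complex.Im y.
Proof. by case: x; case: y. Qed.
Lemma ReM (x y : C) : complex.Re (x * y) = complex.Re x * complex.Re y - complex.Im x * complex.Im y.
Proof. by case: x => ? ?; case: y. Qed.
Lemma ImM (x y : C) : complex.Im (x * y) = complex.Re x * complex.Im y + complex.Im x * complex.Re y.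
Proof. by case: x => ? ?; case: y. Qed.

Lemma mulcE (x y : C) : x * y = (complex.Re x * complex.Re y - complex.Im x * complex.Im y) +i* (complex.Re x * complex.Im y + complex.Im x * complex.Re y)%C.
Proof. by case: x => ? ?; case: y. Qed.

Lemma csum_cvgD f g : csum_cvg f -> csum_cvg g -> csum_cvg (fun k => f k + g k).
Proof.
move=> [f1 f2] [g1 g2]; split.
- have -> : (fun k => complex.Re (f k + g k)) = (fun k => complex.Re (f k)) + (fun k => complex.Re (g k)).
    by apply: funext => k; rewrite ReD.
  exact: is_cvg_seriesD.
- have -> : (fun k => complex.Im (f k + g k)) = (fun k => complex.Im (f k)) + (fun k => complex.Im (g k)).
    by apply: funext => k; rewrite ImD.
  exact: is_cvg_seriesD.
Qed.

Lemma csumD f g : csum_cvg f -> csum_cvg g -> csum (fun k => f k + g k) = csum f + csum g.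
Proof.
move=> [f1 f2] [g1 g2]; rewrite /csum.
have -> : (fun k => complex.Re (f k + g k)) = (fun k => complex.Re (f k)) + (fun k => complex.Re (g k)).
  by apply: funext => k; rewrite ReD.
have -> : (fun k => complex.Im (f k + g k)) = (fun k => complex.Im (f k)) + (fun k => complex.Im (g k)).
  by apply: funext => k; rewrite ImD.
by rewrite !lim_seriesD.
Qed.

Lemma csum_cvgZ c f : csum_cvg f -> csum_cvg (fun k => c * f k).
Proof.
move=> [f1 f2]; split.
- have -> : (fun k => complex.Re (c * f k)) = (complex.Re c) *: (fun k => complex.Re (f k)) - (complex.Im c) *: (fun k => complex.Im (f k)).
    by apply: funext => k; rewrite ReM.
  by apply: is_cvg_seriesB; apply: is_cvg_seriesZ.
- have -> : (fun k => complex.Im (c * f k)) = (complex.Re c) *: (fun k => complex.Im (f k)) + (complex.Im c) *: (fun k => complex.Re (f k)).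
    by apply: funext => k; rewrite ImM.
  by apply: is_cvg_seriesD; apply: is_cvg_seriesZ.
Qed.

Lemma csumZ c f : csum_cvg f -> csum (fun k => c * f k) = c * csum f.
Proof.
move=> [f1 f2]; rewrite /csum.
have -> : (fun k => complex.Re (c * f k)) = (complex.Re c) *: (fun k => complex.Re (f k)) - (complex.Im c) *: (fun k => complex.Im (f k)).
  by apply: funext => k; rewrite ReM.
have -> : (fun k => complex.Im (c * f k)) = (complex.Re c) *: (fun k => complex.Im (f k)) + (complex.Im c) *: (fun k => complex.Re (f k)).
  by apply: funext => k; rewrite ImM.
rewrite lim_seriesB; try by apply: is_cvg_seriesZ.
rewrite lim_seriesD; try by apply: is_cvg_seriesZ.
rewrite !lim_seriesZ //.
by rewrite mulcE.
Qed.

Lemma csum0 : csum (fun _ => 0 : C) = 0.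
Proof.
rewrite /csum /=.
have -> : series (fun _ : nat => 0 : R) = fun _ => 0.
  by apply: funext => n; rewrite /series /= big1.
by rewrite lim_cst.
Qed.


Lemma series_shift (u : nat -> R) : cvgn (series u) ->
  cvgn (series (fun k => u k.+1)) /\ limn (series u) = u 0%N + limn (series (fun k => u k.+1)).
Proof.
move=> cu.
have e : (fun n => series (fun k => u k.+1) n) = (fun n => series u n.+1 - u 0%N).
  apply: funext => n; rewrite /series /= big_nat_recl //.
  by rewrite [u 0%N + _]addrC addrK.
have h1 : (series u @ \oo --> limn (series u))%classic by exact: cu.
have h2 : ([sequence series u n.+1]_n @ \oo --> limn (series u))%classic by rewrite cvg_shiftS.
have h3 : ((fun n => series u n.+1 - u 0%N) @ \oo --> limn (series u) - u 0%N)%classic.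
  by apply: cvgB => //; exact: cvg_cst.
rewrite -e in h3.
split; first by apply/cvg_ex; exists (limn (series u) - u 0%N).
by rewrite (cvg_lim _ h3) // addrC subrK.
Qed.

Lemma csum_shift f : csum_cvg f ->
  csum_cvg (fun k => f k.+1) /\ csum f = f 0%N + csum (fun k => f k.+1).
Proof.
move=> [f1 f2].
have [g1 e1] := series_shift f1.
have [g2 e2] := series_shift f2.
split; first by split.
rewrite /csum e1 e2.
by case: (f 0%N).
Qed.

Lemma csum_cvgN f : csum_cvg f -> csum_cvg (fun k => - f k).
Proof.
move=> cf; have := csum_cvgZ (-1) cf.
have -> // : (fun k => -1 * f k) = (fun k => - f k).
by apply: funext => k; rewrite mulN1r.
Qed.

Lemma csumN f : csum_cvg f -> csum (fun k => - f k) = - csum f.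
Proof.
move=> cf; have := csumZ (-1) cf.
have -> : (fun k => -1 * f k) = (fun k => - f k).
  by apply: funext => k; rewrite mulN1r.
by move=> ->; rewrite mulN1r.
Qed.

Lemma csum_cvgB f g : csum_cvg f -> csum_cvg g -> csum_cvg (fun k => f k - g k).
Proof. by move=> cf cg; apply: csum_cvgD => //; apply: csum_cvgN. Qed.

Lemma csumB f g : csum_cvg f -> csum_cvg g -> csum (fun k => f k - g k) = csum f - csum g.
Proof. by move=> cf cg; rewrite csumD ?csumN //; apply: csum_cvgN. Qed.

Lemma csum_cvg0 : csum_cvg (fun _ => 0 : C).
Proof.
have e : series (fun _ : nat => 0 : R) = fun _ => 0.
  by apply: funext => n; rewrite /series /= big1.
by split; rewrite /= e; apply: is_cvg_cst.
Qed.

End CS.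

Section Poly.
Variable R : realType.
Local Notation C := R[i].

Definition ip (w : nat -> C) (p : {poly C}) := csum (fun k => p.[k%:R] * w k).

Lemma size_reduce (p q : {poly C}) n : (size p <= n.+1)%N -> size q = n.+1 ->
  q`_n = 1 -> (size (p - p`_n *: q)%R <= n)%N.
Proof.
move=> sp sq qn; apply/leq_sizeP => j hj.
rewrite coefB coefZ.
case: (ltngtP n j) hj => // [hnj _|<- _]; last by rewrite qn mulr1 subrr.
have sq' : (size q <= n.+1)%N by rewrite sq.
by rewrite (leq_sizeP _ _ sp j hnj) (leq_sizeP _ _ sq' j hnj) mulr0 subrr.
Qed.

Variable w : nat -> C.
Hypothesis mw : moments_finite w.

Lemma poly_cvgm (p : {poly C}) m : csum_cvg (fun k => p.[k%:R] * ((k%:R : C) ^+ m * w k)).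
Proof.
elim/poly_ind: p m => [|p c IH] m.
  have -> : (fun k => (0 : {poly C}).[k%:R] * ((k%:R : C) ^+ m * w k)) = (fun _ => 0).
    by apply: funext => k; rewrite horner0 mul0r.
  exact: csum_cvg0.
have -> : (fun k => (p * 'X + c%:P).[k%:R] * ((k%:R : C) ^+ m * w k)) =
  (fun k => p.[k%:R] * ((k%:R : C) ^+ m.+1 * w k) + c * ((k%:R : C) ^+ m * w k)).
  by apply: funext => k; rewrite hornerMXaddC exprS; ring.
apply: csum_cvgD; first exact: IH.
by apply: csum_cvgZ; apply: mw.
Qed.

Lemma poly_cvg (p : {poly C}) : csum_cvg (fun k => p.[k%:R] * w k).
Proof.
have := poly_cvgm p 0.
have -> // : (fun k => p.[k%:R] * ((k%:R : C) ^+ 0 * w k)) = (fun k => p.[k%:R] * w k).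
by apply: funext => k; rewrite expr0 mul1r.
Qed.

Lemma ipD p q : ip w (p + q) = ip w p + ip w q.
Proof.
rewrite /ip -csumD; try exact: poly_cvg.
by congr csum; apply: funext => k; rewrite hornerD mulrDl.
Qed.

Lemma ipZ c p : ip w (c *: p) = c * ip w p.
Proof.
rewrite /ip -csumZ; try exact: poly_cvg.
by congr csum; apply: funext => k; rewrite hornerZ mulrA.
Qed.

Lemma ipB p q : ip w (p - q) = ip w p - ip w q.
Proof.
by rewrite -scaleN1r ipD ipZ mulN1r.
Qed.

Lemma ip0 : ip w 0 = 0.
Proof.
rewrite /ip -csum0; congr csum; apply: funext => k; by rewrite horner0 mul0r.
Qed.

Variables (P : nat -> {poly C}) (H : nat -> C).
Hypothesis hP : is_OPS w P H.

Lemma ip_orth n m : ip w (P n * P m) = if n == m then H n else 0.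
Proof.
have [_ _ _ <-] := hP n.
rewrite /ip; congr csum; apply: funext => k; by rewrite hornerM.
Qed.

Lemma sizeP n : size (P n) = n.+1.
Proof. by have [] := hP n. Qed.

Lemma coefPn n : (P n)`_n = 1.
Proof.
have [/monicP + s _ _] := hP n.
by rewrite lead_coefE s.
Qed.

Lemma orth_low n (q : {poly C}) m : (size q <= n)%N -> (n <= m)%N -> ip w (P m * q) = 0.
Proof.
elim: n q m => [|n IH] q m sq hm.
  move: sq; rewrite leqn0 size_poly_eq0 => /eqP ->.
  by rewrite mulr0 ip0.
have sq' := size_reduce sq (sizeP n) (coefPn n).
have -> : P m * q = q`_n *: (P m * P n) + P m * (q - q`_n *: P n).
  by rewrite mulrBr scalerAr addrC subrK.
rewrite ipD ipZ ip_orth IH //; last exact: ltnW.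
have -> : (m == n) = false by apply/negbTE; rewrite neq_ltn hm orbT.
by rewrite mulr0 addr0.
Qed.

Lemma span_zero n (q : {poly C}) : (size q <= n)%N -> (forall m, (m < n)%N -> ip w (P m * q) = 0) -> q = 0.
Proof.
elim: n q => [|n IH] q sq hq.
  by move: sq; rewrite leqn0 size_poly_eq0 => /eqP.
have sq' := size_reduce sq (sizeP n) (coefPn n).
have e : ip w (P n * q) = q`_n * H n.
  have -> : P n * q = q`_n *: (P n * P n) + P n * (q - q`_n *: P n).
    by rewrite mulrBr scalerAr addrC subrK.
  by rewrite ipD ipZ ip_orth eqxx (orth_low sq') // addr0.
have Hn : H n != 0 by have [] := hP n.
have qn : q`_n = 0.
  apply/eqP; move: (hq n (ltnSn n)); rewrite e => /eqP.
  by rewrite mulf_eq0 (negbTE Hn) orbF.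
move: sq'; rewrite qn scale0r subr0 => sq'.
apply: IH => // m hm; apply: hq; exact: ltnW.
Qed.

Lemma OPS_unique n (Q : {poly C}) : (size Q <= n.+1)%N -> Q`_n = 1 ->
  (forall q : {poly C}, (size q <= n)%N -> ip w (Q * q) = 0) -> Q = P n.
Proof.
move=> sQ cQ hQ.
have sD : (size (P n - Q)%R <= n)%N.
  have := size_reduce (p := P n) (q := Q) (n := n).
  rewrite sizeP coefPn scale1r; apply => //.
  apply/eqP; rewrite eqn_leq sQ /=.
  rewrite ltnNge; apply/negP => /leq_sizeP /(_ n (leqnn n)).
  by rewrite cQ => /eqP; rewrite oner_eq0.
have : P n - Q = 0.
  apply: (span_zero sD) => m hm.
  rewrite mulrBr ipB ip_orth.
  have -> : (m == n) = false by apply/negbTE; rewrite neq_ltn hm.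
  rewrite mulrC hQ ?subrr // sizeP //.
by move/eqP; rewrite subr_eq0 => /eqP.
Qed.

End Poly.

Section Geronimus.
Variable R : realType.
Local Notation C := R[i].

Lemma aux1 (x y u a b A : C) : (x - A*y) * u / (a - b) = - (x*u/(b - a) - A*(y*u/(b - a))).
Proof. rewrite -(opprB a b) invrN; ring. Qed.

Variables (w w' : nat -> C) (c z0 : C).
Variables (P P' : nat -> {poly C}) (H H' : nat -> C).
Hypotheses (mw : moments_finite w) (mw' : moments_finite w')
  (hP : is_OPS w P H) (hP' : is_OPS w' P' H') (c0 : c != 0)
  (hz : forall k : nat, k%:R - z0 != 0)
  (hw : forall k : nat, w' k = c * w k / (k%:R - z0)).

Lemma cvg_div (p : {poly C}) : csum_cvg (fun k => p.[k%:R] * w k / (z0 - k%:R)).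
Proof.
have -> : (fun k => p.[k%:R] * w k / (z0 - k%:R)) = (fun k => (- c^-1) * (p.[k%:R] * w' k)).
  apply: funext => k; rewrite hw.
  have hk := hz k.
  have hk' : z0 - k%:R != 0 by rewrite -oppr_eq0 opprB.
  by field; rewrite c0 hk hk'.
by apply: csum_cvgZ; apply: poly_cvg.
Qed.

Lemma size_sub_const (q : {poly C}) n : (0 < n)%N -> (size q <= n)%N -> (size (q - (q.[z0])%:P)%R <= n)%N.
Proof.
move=> n0 sq; apply/leq_sizeP => j hj.
rewrite coefB coefC (leq_sizeP _ _ sq j hj).
have j0 : (j != 0)%N by rewrite -lt0n (leq_trans n0 hj).
by rewrite (negbTE j0) subrr.
Qed.

Lemma ger_core (A : C) n (q : {poly C}) : (0 < n)%N -> (size q <= n)%N ->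
  ip w' ((P n - A *: P n.-1) * q) = c * q.[z0] * - (Qfun w P n z0 - A * Qfun w P n.-1 z0).
Proof.
move=> n0 sq.
set Rn := P n - A *: P n.-1.
have : root (q - (q.[z0])%:P) z0 by rewrite /root hornerD hornerN hornerC subrr.
case/factor_theorem => s hs.
have ss : (size s <= n.-1)%N.
  have := size_sub_const n0 sq; rewrite hs.
  have [->|s0] := eqVneq s 0; first by rewrite size_poly0.
  rewrite size_mul // ?size_XsubC; last by rewrite -size_poly_eq0 size_XsubC.
  by rewrite addn2 /= => h; rewrite -ltnS prednK.
have e1 : ip w' (Rn * q) = c * q.[z0] * csum (fun k => Rn.[k%:R] * w k / (k%:R - z0))
    + c * ip w (Rn * s).
  rewrite /ip -csumZ; last first.
    have -> : (fun k => Rn.[k%:R] * w k / (k%:R - z0)) = (fun k => - (Rn.[k%:R] * w k / (z0 - k%:R))).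
      apply: funext => k; rewrite -mulrN -invrN opprB //.
    by apply: csum_cvgN; apply: cvg_div.
  rewrite -csumZ; last by apply: poly_cvg.
  rewrite -csumD; first last.
  - by apply: csum_cvgZ; apply: poly_cvg.
  - apply: csum_cvgZ.
    have -> : (fun k => Rn.[k%:R] * w k / (k%:R - z0)) = (fun k => - (Rn.[k%:R] * w k / (z0 - k%:R))).
      apply: funext => k; rewrite -mulrN -invrN opprB //.
    by apply: csum_cvgN; apply: cvg_div.
  congr csum; apply: funext => k.
  have eq : q = s * ('X - z0%:P) + (q.[z0])%:P by rewrite -hs subrK.
  rewrite hw {1}eq !hornerE /=.
  have hk := hz k.
  by field.
have e2 : ip w (Rn * s) = 0.
  rewrite /Rn mulrBl -scalerAl ipB ?ipZ //.
  rewrite (orth_low mw hP (n := n.-1) (m := n)) ?leq_pred //.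
  by rewrite (orth_low mw hP (n := n.-1) (m := n.-1)) // mulr0 subr0.
have e3a : forall k : nat, Rn.[k%:R] * w k / (k%:R - z0) =
     - ((P n).[k%:R] * w k / (z0 - k%:R) - A * ((P n.-1).[k%:R] * w k / (z0 - k%:R))).
  move=> k; rewrite /Rn hornerD hornerN hornerZ; exact: aux1.
have e3 : csum (fun k => Rn.[k%:R] * w k / (k%:R - z0)) = - (Qfun w P n z0 - A * Qfun w P n.-1 z0).
  rewrite (funext e3a).
  rewrite csumN; last by apply: csum_cvgB; [apply: cvg_div | apply: csum_cvgZ; apply: cvg_div].
  rewrite csumB; [|apply: cvg_div | apply: csum_cvgZ; apply: cvg_div].
  rewrite csumZ; last by apply: cvg_div.
  by rewrite -/(Qfun w P n z0) -/(Qfun w P n.-1 z0).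
by rewrite e1 e2 e3 !mulr0 addr0.
Qed.


Lemma sizes_Rn (A : C) n : (0 < n)%N -> (size (P n - A *: P n.-1)%R <= n.+1)%N /\ (P n - A *: P n.-1)`_n = 1.
Proof.
move=> n0.
have sPn : (size (P n) <= n.+1)%N by rewrite (sizeP hP).
have sPn1 : (size (P n.-1) <= n)%N by rewrite (sizeP hP) ltn_predL.
split.
- apply/leq_sizeP => j hj.
  rewrite coefB coefZ (leq_sizeP _ _ sPn j hj) (leq_sizeP _ _ sPn1 j (ltnW hj)).
  by rewrite mulr0 subr0.
- by rewrite coefB coefZ (coefPn hP) (leq_sizeP _ _ sPn1 n (leqnn n)) mulr0 subr0.
Qed.

Lemma geronimus n : (0 < n)%N -> Qfun w P n.-1 z0 != 0 ->
  P' n = P n - (Qfun w P n z0 / Qfun w P n.-1 z0) *: P n.-1.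
Proof.
move=> n0 hQ.
have [s1 s2] := sizes_Rn (Qfun w P n z0 / Qfun w P n.-1 z0) n0.
symmetry; apply: (OPS_unique mw' hP') => // q sq.
by rewrite ger_core // divfK // subrr oppr0 mulr0.
Qed.

End Geronimus.

Section Third.
Variable R : realType.
Local Notation C := R[i].

Lemma aux2 (Pn Pm Qn Qm U q0 A : C) : A * (U * Qm - Pm) = U * Qn - Pn ->
  (Pn - A * Pm) * q0 + U * q0 * - (Qn - A * Qm) = 0.
Proof.
move=> hA.
have -> : (Pn - A * Pm) * q0 + U * q0 * - (Qn - A * Qm) = q0 * (A * (U * Qm - Pm) - (U * Qn - Pn)) by ring.
by rewrite hA subrr mulr0.
Qed.

Lemma hXm1 (x : C) : ('X - 1 : {poly C}).[x] = x - 1.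
Proof. by rewrite -polyC1 hornerXsubC. Qed.
Lemma hXp1 (x : C) : ('X + 1 : {poly C}).[x] = x + 1.
Proof. by rewrite -polyC1 hornerD hornerX hornerC. Qed.

Lemma natS (k : nat) : (k.+1%:R : C) = k%:R + 1.
Proof. by rewrite -addn1 natrD. Qed.

Lemma mom_shift (w : nat -> C) : moments_finite w -> moments_finite (fun k => w k.+1).
Proof.
move=> mw m.
have := (csum_shift (poly_cvg mw (('X - 1) ^+ m))).1.
have -> // : (fun k => (('X - 1) ^+ m : {poly C}).[k.+1%:R] * w k.+1) = (fun k => (k%:R : C) ^+ m * w k.+1).
apply: funext => k; by rewrite horner_exp hXm1 natS addrK.
Qed.

Variables (w w' : nat -> C) (U : C).
Variables (P P' : nat -> {poly C}) (H H' : nat -> C).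
Hypotheses (mw : moments_finite w) (mw' : moments_finite w')
  (hP : is_OPS w P H) (hP' : is_OPS w' P' H')
  (hw0 : w' 0%N = 1) (hwS : forall k : nat, w' k.+1 = U * w k / (k.+1)%:R).

Lemma third n : (0 < n)%N -> U * Qfun w P n.-1 (-1) - (P n.-1).[-1] != 0 ->
  P' n = P n \Po ('X - 1)
               - ((U * Qfun w P n (-1) - (P n).[-1])
                  / (U * Qfun w P n.-1 (-1) - (P n.-1).[-1]))
                 *: (P n.-1 \Po ('X - 1)).
Proof.
move=> n0 hD.
set A := (U * Qfun w P n (-1) - (P n).[-1]) / (U * Qfun w P n.-1 (-1) - (P n.-1).[-1]).
have hA : A * (U * Qfun w P n.-1 (-1) - (P n.-1).[-1]) = U * Qfun w P n (-1) - (P n).[-1].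
  by rewrite /A divfK.
set Rb := P n - A *: P n.-1.
have -> : P n \Po ('X - 1) - A *: (P n.-1 \Po ('X - 1)) = Rb \Po ('X - 1).
  by rewrite /Rb comp_polyB comp_polyZ.
have [s1 s2] := sizes_Rn hP A n0.
have sX : size ('X - 1 : {poly C}) = 2 by rewrite -polyC1 size_XsubC.
have sRb : size Rb = n.+1.
  apply/eqP; rewrite eqn_leq s1 /=.
  rewrite ltnNge; apply/negP => /leq_sizeP /(_ n (leqnn n)).
  by rewrite s2 => /eqP; rewrite oner_eq0.
symmetry; apply: (OPS_unique mw' hP').
- by rewrite size_comp_poly2 // sRb.
- have := lead_coef_comp Rb (q := 'X - 1); rewrite sX => /(_ isT).
  have l1 : lead_coef ('X - 1 : {poly C}) = 1 by rewrite -polyC1 lead_coefXsubC.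
  rewrite l1 expr1n mulr1 !lead_coefE (size_comp_poly2 _ sX) sRb /= => ->.
  exact: s2.
move=> q sq.
rewrite /ip (csum_shift (poly_cvg mw' _)).2.
set g := q \Po ('X + 1).
have sg : (size g <= n)%N.
  apply: leq_trans (size_comp_poly_leq _ _) _.
  have s2' : size ('X + 1 : {poly C}) = 2 
    by rewrite -[X in 'X + X]opprK -polyC1 -polyCN size_XsubC.
  rewrite s2' muln1.
  by case: (size q) sq => [|m] //= _.
have e0 : ((Rb \Po ('X - 1)) * q).[0%N%:R] * w' 0%N = Rb.[-1] * q.[0].
  by rewrite hw0 mulr1 hornerM horner_comp hXm1 sub0r.
have e1 : (fun k => ((Rb \Po ('X - 1)) * q).[k.+1%:R] * w' k.+1) =
          (fun k => (Rb * g).[k%:R] * w' k.+1).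
  apply: funext => k.
  by rewrite !hornerM !horner_comp hXm1 hXp1 natS addrK.
rewrite e0 e1.
have [U0|U0] := eqVneq U 0.
  have -> : (fun k => (Rb * g).[k%:R] * w' k.+1) = (fun _ => 0).
    by apply: funext => k; rewrite hwS U0 !mul0r mulr0.
  rewrite csum0 addr0.
  move: hA; rewrite U0 !mul0r !sub0r mulrN => /oppr_inj hA'.
  by rewrite /Rb hornerD hornerN hornerZ hA' subrr mul0r.
have := ger_core (w' := fun k => w' k.+1) (c := U) (z0 := -1) mw (mom_shift mw') hP U0.
have hz : forall k : nat, (k%:R : C) - -1 != 0.
  by move=> k; rewrite opprK -natS pnatr_eq0.
have hw : forall k : nat, w' k.+1 = U * w k / (k%:R - -1).
  by move=> k; rewrite hwS opprK -natS.
move=> /(_ hz hw A n g n0 sg) hc.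
rewrite -/(ip _ _) hc.
have -> : g.[-1] = q.[0] by rewrite horner_comp hXp1 addNr.
rewrite /Rb hornerD hornerN hornerZ.
exact: aux2.
Qed.

End Third.

Section Weights.
Variable R : realType.
Local Notation C := R[i].

Lemma poch0 (x : C) : poch x 0 = 1.
Proof. by rewrite /poch big_ord0. Qed.

Lemma pochS (x : C) k : poch x k.+1 = x * poch (x + 1) k.
Proof.
rewrite /poch big_ord_recl /= addr0; congr (_ * _).
by apply: eq_bigr => l _; rewrite /bump /= natS addrA [x + _ + 1]addrAC -addrA.
Qed.

Lemma pochSr (x : C) k : poch x k.+1 = poch x k * (x + k%:R).
Proof. by rewrite /poch big_ord_recr. Qed.

Lemma poch_m1 (x : C) k : poch (x - 1) k * (x - 1 + k%:R) = (x - 1) * poch x k.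
Proof. by rewrite -pochSr pochS subrK. Qed.

Variables (M N : nat) (eta : C) (a : 'I_M -> C) (b : 'I_N -> C).

Lemma weight_a (i : 'I_M) k : k%:R - (1 - a i) != 0 ->
  weight eta (shift_a i a) b k = (a i - 1) * weight eta a b k / (k%:R - (1 - a i)).
Proof.
move=> hk.
have e : k%:R - (1 - a i) = a i - 1 + k%:R by rewrite opprB addrC.
rewrite e in hk *.
rewrite /weight (bigD1 i) //= [in RHS](bigD1 i) //= {1}/shift_a eqxx.
have -> : \prod_(l < M | l != i) poch (shift_a i a l) k = \prod_(l < M | l != i) poch (a l) k.
  by apply: eq_bigr => l /negbTE hl; rewrite /shift_a hl.
have hp : poch (a i - 1) k = (a i - 1) * poch (a i) k / (a i - 1 + k%:R).
  by rewrite -poch_m1 mulfK.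
rewrite hp.
move: (poch (a i) k) (\prod_(l < M | l != i) poch (a l) k) (k`!%:R * \prod_(j < N) poch (b j) k : C) (eta ^+ k) => x y z t.
rewrite /=. ring.
Qed.


Lemma weight_b (j : 'I_N) k : b j != 0 -> k%:R - (- b j) != 0 ->
  weight eta a (shift_b j b) k = b j * weight eta a b k / (k%:R - (- b j)).
Proof.
move=> b0 hk.
have e : k%:R - (- b j) = b j + k%:R by rewrite opprK addrC.
rewrite e in hk *.
rewrite /weight (bigD1 j (P := predT)) //= [in RHS](bigD1 j (P := predT)) //= {1}/shift_b eqxx.
have -> : \prod_(l < N | l != j) poch (shift_b j b l) k = \prod_(l < N | l != j) poch (b l) k.
  by apply: eq_bigr => l /negbTE hl; rewrite /shift_b hl.
have hp : poch (b j + 1) k = poch (b j) k * (b j + k%:R) / b j.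
  by rewrite -pochSr pochS [b j * _]mulrC mulfK.
rewrite hp.
move: (poch (b j) k) (\prod_(l < N | l != j) poch (b l) k) (k`!%:R : C) (eta ^+ k) (\prod_(i < M) poch (a i) k) => x y z t u.
rewrite !invfM invrK. ring.
Qed.

Lemma weight_all0 : weight eta (shift_all a) (shift_all b) 0%N = 1.
Proof.
rewrite /weight !big1 ?expr0 ?mulr1 ?invr1 ?mul1r ?invr1 //; by move=> l _; rewrite poch0.
Qed.

Lemma weight_allS k : weight eta (shift_all a) (shift_all b) k.+1 =
  (eta * (\prod_(i < M) (a i - 1)) / \prod_(j < N) (b j - 1)) * weight eta a b k / (k.+1)%:R.
Proof.
rewrite /weight /shift_all.
rewrite (eq_bigr (fun l => (a l - 1) * poch (a l) k)); last by move=> l _; rewrite pochS subrK.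
rewrite [X in _ / (_ * X) * _](eq_bigr (fun l => (b l - 1) * poch (b l) k)); last by move=> l _; rewrite pochS subrK.
rewrite !big_split /= factS natrM exprS.
move: (\prod_(i < M) (a i - 1)) (\prod_(i < M) poch (a i) k) (\prod_(i < N) (b i - 1)) (\prod_(i < N) poch (b i) k) (k`!%:R : C) (eta ^+ k) (k.+1%:R : C) => x y z t u v r.
rewrite !invfM. ring.
Qed.

End Weights.

Theorem mainTheorem6 (R : realType) (M N : nat) (eta : R[i])
    (a : 'I_M -> R[i]) (b : 'I_N -> R[i])
    (P : nat -> {poly R[i]}) (H : nat -> R[i]) :
  (forall (i : 'I_M) (m : nat), 1 - a i != m%:R) ->
  (forall (j : 'I_N) (m : nat), - b j != m%:R) ->
  moments_finite (weight eta a b) ->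
  hankel_nonzero (weight eta a b) ->
  is_OPS (weight eta a b) P H ->
  (* Geronimus transformation a_i -> a_i - 1 *)
  [/\ (forall (i : 'I_M) (P' : nat -> {poly R[i]}) (H' : nat -> R[i]),
        moments_finite (weight eta (shift_a i a) b) ->
        hankel_nonzero (weight eta (shift_a i a) b) ->
        is_OPS (weight eta (shift_a i a) b) P' H' ->
        forall n : nat, (0 < n)%N ->
        Qfun (weight eta a b) P n.-1 (1 - a i) != 0 ->
        P' n = P n - (Qfun (weight eta a b) P n (1 - a i)
                      / Qfun (weight eta a b) P n.-1 (1 - a i)) *: P n.-1),
  (* Geronimus transformation b_j -> b_j + 1 *)
      (forall (j : 'I_N) (P' : nat -> {poly R[i]}) (H' : nat -> R[i]),
        moments_finite (weight eta a (shift_b j b)) ->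
        hankel_nonzero (weight eta a (shift_b j b)) ->
        is_OPS (weight eta a (shift_b j b)) P' H' ->
        forall n : nat, (0 < n)%N ->
        Qfun (weight eta a b) P n.-1 (- b j) != 0 ->
        P' n = P n - (Qfun (weight eta a b) P n (- b j)
                      / Qfun (weight eta a b) P n.-1 (- b j)) *: P n.-1) &
  (* T^{-1}: all a_i -> a_i - 1 and all b_j -> b_j - 1 *)
      (forall (P' : nat -> {poly R[i]}) (H' : nat -> R[i]),
        moments_finite (weight eta (shift_all a) (shift_all b)) ->
        hankel_nonzero (weight eta (shift_all a) (shift_all b)) ->
        is_OPS (weight eta (shift_all a) (shift_all b)) P' H' ->
        \prod_(j < N) (b j - 1) != 0 ->
        let Ups := eta * (\prod_(i < M) (a i - 1)) / \prod_(j < N) (b j - 1) in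
        forall n : nat, (0 < n)%N ->
        Ups * Qfun (weight eta a b) P n.-1 (-1) - (P n.-1).[-1] != 0 ->
        P' n = P n \Po ('X - 1)
               - ((Ups * Qfun (weight eta a b) P n (-1) - (P n).[-1])
                  / (Ups * Qfun (weight eta a b) P n.-1 (-1) - (P n.-1).[-1]))
                 *: (P n.-1 \Po ('X - 1)))].
Proof.
move=> ha hb mw _ hP; split.
- move=> i P' H' mw' _ hP' n n0 hQ.
  have hz : forall k : nat, (k%:R : R[i]) - (1 - a i) != 0.
    by move=> k; rewrite subr_eq0 eq_sym ha.
  have c0 : a i - 1 != 0.
    by rewrite -oppr_eq0 opprB; have := ha i 0%N.
  by apply: (geronimus mw mw' hP hP' c0 hz) => // k; apply: weight_a.
- move=> j P' H' mw' _ hP' n n0 hQ.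
  have hz : forall k : nat, (k%:R : R[i]) - (- b j) != 0.
    by move=> k; rewrite subr_eq0 eq_sym hb.
  have c0 : b j != 0.
    by rewrite -oppr_eq0; have := hb j 0%N.
  by apply: (geronimus mw mw' hP hP' c0 hz) => // k; apply: weight_b.
- move=> P' H' mw' _ hP' _ Ups n n0 hD.
  apply: (third mw mw' hP hP') => //; first exact: weight_all0.
  by move=> k; rewrite weight_allS.
Qed.
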